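(* Let $X_1,X_2,\dots$ be iid real random variables with common continuous distribution function $F$. Then for all integers $1\le j<k$ and all $y_1,y_2\in\mathbb{R}$, \[ \Pr(X_j\le y_1,X_k\le y_2\mid X_j\text{ and }X_k\text{ are records}) =\begin{cases} \frac{F^j(y_1)}{k-j}\left(kF^{k-j}(y_2)-jF^{k-j}(y_1)\right), & \text{if } F(y_1)<F(y_2),\\[2pt] F^k(y_2)=\Pr(X_k\le y_2\mid X_k\text{ is a record}), & \text{if } F(y_2)\le F(y_1). \end{cases} \]
   Context: $X_m$ is a record if $X_m>\max(X_1,\dots,X_{m-1})$; $X_1$ is always a record. *)

(* Defs.v *)
From HB Require Import structures.
From mathcomp Require Import all_boot all_order all_algebra.
From mathcomp Require Import all_classical all_reals all_analysis.
Set Implicit Arguments. Unset Strict Implicit. Unset Printing Implicit Defensive.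
Import Order.TTheory GRing.Theory Num.Theory.
Import numFieldNormedType.Exports.
Local Open Scope classical_set_scope.
Local Open Scope ring_scope.

Definition prb d (T : measurableType d) (R : realType) (P : probability T R)
  (A : set T) : R := fine (P A).

Definition cond_prob d (T : measurableType d) (R : realType)
  (P : probability T R) (A B : set T) : R :=
  prb P (A `&` B) / prb P B.

(* The sequence X_1, X_2, ... is represented by X : nat -> {RV P >-> R}
   with X_n := X (n.-1), i.e. X 0 is X_1. *)
Definition Xn d (T : measurableType d) (R : realType) (P : probability T R)
  (X : nat -> {RV P >-> R}) (n : nat) : T -> R := fun w => X n.-1 w.

Definition mutually_independent d (T : measurableType d) (R : realType)
  (P : probability T R) (X : nat -> {RV P >-> R}) : Prop :=
  forall (s : seq nat) (B : nat -> set R), uniq s ->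
    (forall i, measurable (B i)) ->
    prb P (\bigcap_(i in [set i | i \in s]) (X i @^-1` B i))
    = \prod_(i <- s) prb P (X i @^-1` B i).

Definition identically_distributed d (T : measurableType d) (R : realType)
  (P : probability T R) (X : nat -> {RV P >-> R}) : Prop :=
  forall n (y : R), P [set w | X n w <= y] = P [set w | X 0%N w <= y].

Definition common_cdf d (T : measurableType d) (R : realType)
  (P : probability T R) (X : nat -> {RV P >-> R}) (y : R) : R :=
  prb P [set w | X 0%N w <= y].

Definition is_record d (T : measurableType d) (R : realType)
  (P : probability T R) (X : nat -> {RV P >-> R}) (m : nat) : set T :=
  [set w | forall i, (1 <= i < m)%N -> Xn X i w < Xn X m w].

(* Main.v *)
Require Import Defs.
From HB Require Import structures.
From mathcomp Require Import all_boot all_order all_algebra.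
From mathcomp Require Import all_classical all_reals all_analysis.
Import Order.TTheory GRing.Theory Num.Theory.
Import numFieldNormedType.Exports.
Local Open Scope classical_set_scope.
Local Open Scope ring_scope.
From mathcomp Require Import ring lra zify.
Section prb_basics.
Context d (T : measurableType d) (R : realType) (P : probability T R).

Lemma prbE (A : set T) : measurable A -> (prb P A)%:E = P A.
Proof. by move=> mA; rewrite /prb fineK// fin_num_measure. Qed.

Lemma prb_ge0 (A : set T) : 0 <= prb P A.
Proof. by rewrite /prb fine_ge0// measure_ge0. Qed.

Lemma prb_le (A B : set T) : measurable A -> measurable B -> A `<=` B ->
  prb P A <= prb P B.
Proof.
move=> mA mB AB; rewrite -lee_fin !prbE//.
by apply: le_measure => //; rewrite inE.
Qed.

Lemma prbT : prb P setT = 1.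
Proof. by rewrite /prb probability_setT. Qed.

Lemma prb0 : prb P set0 = 0.
Proof. by rewrite /prb measure0. Qed.

Lemma prbU (A B : set T) : measurable A -> measurable B -> A `&` B = set0 ->
  prb P (A `|` B) = prb P A + prb P B.
Proof.
move=> mA mB AB; apply: EFin_inj; rewrite EFinD !prbE//; last exact: measurableU.
by rewrite measureU.
Qed.

Lemma prbU_le (A B : set T) : measurable A -> measurable B ->
  prb P (A `|` B) <= prb P A + prb P B.
Proof.
move=> mA mB; rewrite -lee_fin EFinD !prbE//; last exact: measurableU.
exact: measureU2.
Qed.

Lemma prbD (A B : set T) : measurable A -> measurable B -> B `<=` A ->
  prb P (A `\` B) = prb P A - prb P B.
Proof.
move=> mA mB BA.
have -> : prb P A = prb P ((A `\` B) `|` B) by rewrite setUC setDUK.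
rewrite prbU ?addrK//; first exact: measurableD.
by rewrite setDKI.
Qed.

Lemma prbC (A : set T) : measurable A -> prb P (~` A) = 1 - prb P A.
Proof. by move=> mA; rewrite -setTD prbD// prbT. Qed.

Lemma prb_bigU_le (s : seq nat) (A : nat -> set T) :
  (forall i, measurable (A i)) ->
  measurable (\big[setU/set0]_(i <- s) A i) /\
  prb P (\big[setU/set0]_(i <- s) A i) <= \sum_(i <- s) prb P (A i).
Proof.
move=> mA; elim: s => [|a s [ms IH]]; first by rewrite !big_nil prb0.
rewrite !big_cons; split; first exact: measurableU.
by rewrite (le_trans (prbU_le _ _ (mA a) ms))// lerD.
Qed.

Lemma in_bigsetU_seq (U : Type) (s : seq nat) (A : nat -> set U) x :
  (\big[setU/set0]_(i <- s) A i) x <-> exists2 i, i \in s & A i x.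
Proof.
elim: s => [|a s IH]; rewrite ?big_nil ?big_cons; first by split=> // -[].
split.
- case=> [Ax|/IH [i si Ax]]; first by exists a; rewrite ?mem_head.
  by exists i; rewrite // in_cons si orbT.
- move=> [i]; rewrite in_cons => /orP [/eqP ->|si Ax]; first by left.
  by right; apply/IH; exists i.
Qed.

Lemma prb_bigU (s : seq nat) (A : nat -> set T) :
  (forall i, measurable (A i)) -> uniq s ->
  (forall i j, i \in s -> j \in s -> i != j -> A i `&` A j = set0) ->
  prb P (\big[setU/set0]_(i <- s) A i) = \sum_(i <- s) prb P (A i).
Proof.
move=> mA; elim: s => [|a s IH]; first by rewrite !big_nil prb0.
rewrite /= => /andP [as_ us] dis.
rewrite !big_cons prbU//; last 2 first.
- by case: (prb_bigU_le s A mA).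
- apply/seteqP; split=> // x [Ax /in_bigsetU_seq [i si Aix]].
  have : (A a `&` A i) x by [].
  rewrite dis ?mem_head ?in_cons ?si ?orbT//.
  by apply: contraNneq as_ => ->.
rewrite IH// => i j si sj ij; apply: dis => //; rewrite in_cons ?si ?sj orbT//.
Qed.

End prb_basics.
Arguments prbE {d T R} P {A}.
Arguments prb_le {d T R} P {A B}.
Arguments prbU {d T R} P {A B}.
Arguments prbU_le {d T R} P {A B}.
Arguments prbD {d T R} P {A B}.
Arguments prbC {d T R} P {A}.
Arguments prb_bigU_le {d T R} P s {A}.
Arguments prb_bigU {d T R} P s {A}.
Section main.
Context d (T : measurableType d) (R : realType) (P : probability T R)
  (X : nat -> {RV P >-> R}).
Context (Hind : mutually_independent X) (Hid : identically_distributed X).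

Local Notation F := (common_cdf X).

Definition pre (pi : nat -> nat) (S : set (nat -> R)) : set T :=
  [set w | S (fun i => X (pi i) w)].

Lemma mX i (B : set R) : measurable B -> measurable (X i @^-1` B).
Proof. exact: measurable_funPTI. Qed.

Lemma prbX_le i y : prb P (X i @^-1` `]-oo, y]) = F y.
Proof. by rewrite preimage_itvNyc /prb /common_cdf Hid. Qed.

Definition Rect (s : seq nat) (c : nat -> R) : set (nat -> R) :=
  [set x | forall i, i \in s -> x i <= c i].

Lemma pre_rect pi (Hpi : involutive pi) s c : pre pi (Rect s c) =
  \bigcap_(i in [set i | i \in map pi (undup s)]) (X i @^-1` `]-oo, c (pi i)]).
Proof.
apply/seteqP; split=> w /=.
- move=> H _ /mapP [i si ->] /=; rewrite in_itv/= Hpi; apply: H.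
  by rewrite -mem_undup.
- move=> H i si; have := H (pi i); rewrite /= in_itv /= Hpi; apply.
  by apply: map_f; rewrite mem_undup.
Qed.

Lemma pre_rect_meas pi s c : measurable (pre pi (Rect s c)).
Proof.
elim: s => [|a s IH].
  rewrite (_ : pre pi (Rect [::] c) = setT) //.
  by apply/seteqP; split=> // w _ i.
rewrite (_ : pre pi (Rect (a :: s) c) =
   X (pi a) @^-1` `]-oo, c a] `&` pre pi (Rect s c)).
  by apply: measurableI => //; apply: mX.
apply/seteqP; split=> w /=.
- move=> H; split; first by rewrite in_itv/= H ?mem_head.
  by move=> i si; apply: H; rewrite in_cons si orbT.
- rewrite in_itv/= => -[H1 H2] i; rewrite in_cons => /orP [/eqP ->//|].
  exact: H2.
Qed.

Lemma prb_rect pi (Hpi : involutive pi) s c :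
  prb P (pre pi (Rect s c)) = \prod_(i <- undup s) F (c i).
Proof.
rewrite pre_rect// (Hind _ (fun i => `]-oo, c (pi i)]%classic)).
- by rewrite big_map; apply: eq_bigr => i _; rewrite Hpi prbX_le.
- by rewrite map_inj_uniq ?undup_uniq//; exact: can_inj Hpi.
- by move=> i; exact: measurable_itv.
Qed.

Definition Gsys : set (set (nat -> R)) := [set A | exists s c, A = Rect s c].

Definition Gen (S : set (nat -> R)) := <<s Gsys >> S.

Lemma GsysI : setI_closed Gsys.
Proof.
move=> A B [s1 [c1 ->]] [s2 [c2 ->]].
exists (s1 ++ s2), (fun i => if i \in s1 then (if i \in s2 then
  Num.min (c1 i) (c2 i) else c1 i) else c2 i).
apply/seteqP; split=> x /=.
- move=> [H1 H2] i; rewrite mem_cat => /orP [] si.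
  + rewrite si; case: ifP => si2; last exact: H1.
    by rewrite le_min H1 ?H2.
  + case: ifP => si1; last exact: H2.
    by rewrite si le_min H1 ?H2.
- move=> H; split=> i si.
  + have := H i; rewrite mem_cat si /= => /(_ isT).
    by case: ifP => // _; rewrite le_min => /andP[].
  + have := H i; rewrite mem_cat si orbT => /(_ isT).
    by case: ifP => // _; rewrite le_min => /andP[].
Qed.

Lemma exch pi (Hpi : involutive pi) S : Gen S ->
  measurable (pre pi S) /\ measurable (pre id S) /\ P (pre pi S) = P (pre id S).
Proof.
move=> GS.
pose H := [set S | measurable (pre pi S) /\ measurable (pre id S) /\
                   P (pre pi S) = P (pre id S)].
suff : <<s setT, Gsys >> `<=` H by move=> /(_ S GS).
apply: (@lambda_system_subset _ _ GsysI setT H); last by [].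
- apply/dynkin_lambda_system; split.
  + rewrite /H/=; split; first exact: measurableT.
    by split; first exact: measurableT.
  + move=> A [m1 [m2 e]]; split; first exact: measurableC.
    split; first exact: measurableC.
    by rewrite !probability_setC// e.
  + move=> Fs tF HF.
    have m1 n : measurable (pre pi (Fs n)) by case: (HF n).
    have m2 n : measurable (pre id (Fs n)) by case: (HF n) => _ [].
    have t1 ρ : trivIset setT (fun n => pre ρ (Fs n)).
      move=> i j _ _ [w [Hi Hj]]; apply: tF => //.
      by exists (fun l => X (ρ l) w).
    have E1 ρ : pre ρ (\bigcup_n Fs n) = \bigcup_n pre ρ (Fs n).
      by apply/seteqP; split=> w /= [n _ Hn]; exists n.
    rewrite /H/= !E1; split; first by apply: bigcup_measurable => n _.
    split; first by apply: bigcup_measurable => n _.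
    rewrite !measure_bigcup//; apply: eq_eseriesr => n _.
    by case: (HF n) => _ [].
- move=> A [s [c ->]]; split; first exact: pre_rect_meas.
  split; first exact: pre_rect_meas.
  by rewrite -!prbE ?prb_rect//; exact: pre_rect_meas.
Qed.

End main.
Arguments Rect {R}.
Arguments Gen {R}.
Arguments Gsys {R}.
Arguments pre {d T R P}.
Arguments exch {d T R P X}.
Arguments prb_rect {d T R P X}.
Arguments pre_rect_meas {d T R P}.
Arguments mX {d T R P}.
Arguments prbX_le {d T R P X}.
Section gen.
Context (R : realType).
Local Notation Gen := (@Gen R) (only parsing).

Lemma GenC A : Gen A -> Gen (~` A).
Proof. exact: sigma_algebraC. Qed.

Lemma Gen_bigcup (A : nat -> set (nat -> R)) :
  (forall n, Gen (A n)) -> Gen (\bigcup_n A n).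
Proof. exact: sigma_algebra_bigcup. Qed.

Lemma Gen0 : Gen set0.
Proof. exact: sigma_algebra0. Qed.

Lemma GenT : Gen setT.
Proof. by rewrite -setC0; apply: GenC; exact: Gen0. Qed.

Lemma GenU A B : Gen A -> Gen B -> Gen (A `|` B).
Proof.
move=> GA GB; rewrite -bigcup2E; apply: Gen_bigcup => -[|[|n]]//=.
exact: Gen0.
Qed.

Lemma GenI A B : Gen A -> Gen B -> Gen (A `&` B).
Proof.
move=> GA GB; rewrite -[A `&` B]setCK setCI.
by apply: GenC; apply: GenU; apply: GenC.
Qed.

Lemma Gen_rect s c : Gen (Rect s c).
Proof. by apply: sub_sigma_algebra; exists s, c. Qed.

Lemma Gen_le i (c : R) : Gen [set x | x i <= c].
Proof.
rewrite (_ : [set x | x i <= c] = Rect [:: i] (fun=> c)); first exact: Gen_rect.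
apply/seteqP; split=> x /=; first by move=> H l; rewrite inE => /eqP ->.
by apply; rewrite mem_head.
Qed.

Lemma Gen_lt a b : Gen [set x : nat -> R | x a < x b].
Proof.
pose q n : R := ratr (odflt 0 (unpickle n)).
rewrite (_ : [set x | x a < x b] =
   \bigcup_n ([set x | x a <= q n] `&` ~` [set x | x b <= q n])).
  by apply: Gen_bigcup => n; apply: GenI; [|apply: GenC]; apply: Gen_le.
apply/seteqP; split=> x /=.
- move=> /rat_in_itvoo [r]; rewrite in_itv/= => /andP [h1 h2].
  exists (pickle r) => //=; rewrite /q pickleK /=; split; first exact: ltW.
  by apply/negP; rewrite -ltNge.
- move=> [n _ [h1 h2]]; apply: (le_lt_trans h1); rewrite ltNge; exact/negP.
Qed.

Lemma Gen_eq a b : Gen [set x : nat -> R | x a = x b].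
Proof.
rewrite (_ : [set x | x a = x b] =
   ~` ([set x | x a < x b] `|` [set x | x b < x a])).
  by apply: GenC; apply: GenU; apply: Gen_lt.
apply/seteqP; split=> x /=.
- by move=> -> [] /=; rewrite ltxx.
- move=> H; apply/eqP; rewrite eq_le !leNgt; apply/andP; split; apply/negP => h.
  + by apply: H; right.
  + by apply: H; left.
Qed.

Lemma Gen_all (s : seq nat) (Q : nat -> set (nat -> R)) : (forall l, Gen (Q l)) ->
  Gen [set x | forall l, l \in s -> Q l x].
Proof.
move=> GQ; elim: s => [|a s IH].
  rewrite (_ : [set x | _] = setT); first exact: GenT.
  by apply/seteqP; split=> // x _ l.
rewrite (_ : [set x | _] = Q a `&` [set x | forall l, l \in s -> Q l x]).
  exact: GenI.
apply/seteqP; split=> x /=.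
- by move=> H; split; [apply: H; rewrite mem_head|move=> l sl; apply: H; rewrite in_cons sl orbT].
- by move=> [H1 H2] l; rewrite in_cons => /orP [/eqP ->|]; [|apply: H2].
Qed.

End gen.

Definition Max (R : realType) (I : seq nat) (a : nat) : set (nat -> R) :=
  [set x | forall l, l \in I -> l != a -> x l < x a].

Definition Box (R : realType) (s : seq nat) (y : R) : set (nat -> R) :=
  Rect s (fun=> y).
Arguments Box {R}.

Lemma Gen_Max (R : realType) (I : seq nat) a : Gen (Max R I a).
Proof.
rewrite (_ : Max R I a = [set x | forall l, l \in I ->
   (if l != a then [set x : nat -> R | x l < x a] else setT) x]).
  by apply: Gen_all => l; case: ifP => _; [apply: Gen_lt|apply: GenT].
apply/seteqP; split=> x /=.
- by move=> H l lI; case: ifP => // la; apply: H.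
- by move=> H l lI la; have := H l lI; rewrite la.
Qed.

Definition swapn (a b i : nat) : nat :=
  if i == a then b else if i == b then a else i.

Lemma swapnK a b : involutive (swapn a b).
Proof.
move=> i; rewrite /swapn; case: (eqVneq i a) => [->|ia]; rewrite ?eqxx.
  by case: (eqVneq b a) => [->|]; rewrite ?eqxx.
case: (eqVneq i b) => [->|ib]; rewrite ?eqxx //.
by rewrite (negPf ia) (negPf ib).
Qed.

Lemma swapn_l a b : swapn a b a = b.
Proof. by rewrite /swapn eqxx. Qed.

Lemma swapn_r a b : swapn a b b = a.
Proof. by rewrite /swapn eqxx; case: eqVneq => [->|]. Qed.

Lemma swapn_other a b l : l != a -> l != b -> swapn a b l = l.
Proof. by rewrite /swapn => /negPf -> /negPf ->. Qed.

Lemma swapn_mem a b (s : seq nat) l : (a \in s) = (b \in s) ->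
  (swapn a b l \in s) = (l \in s).
Proof.
move=> ab; rewrite /swapn; case: (eqVneq l a) => [->|la]; first by rewrite ab.
by case: (eqVneq l b) => [->|//]; rewrite ab.
Qed.

Lemma inv_box (R : realType) (s : seq nat) (y : R) b c (x : nat -> R) :
  (b \in s) = (c \in s) ->
  Box s y (fun i => x (swapn b c i)) <-> Box s y x.
Proof.
move=> bc; split=> H i si /=.
- by have := H (swapn b c i); rewrite swapnK swapn_mem// => /(_ si).
- by apply: H; rewrite swapn_mem.
Qed.

Lemma inv_max (R : realType) (I : seq nat) a b c (x : nat -> R) :
  (b \in I) = (c \in I) -> b != a -> c != a ->
  Max R I a (fun i => x (swapn b c i)) <-> Max R I a x.
Proof.
move=> bc ba ca; have sa : swapn b c a = a by rewrite swapn_other // eq_sym.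
split=> H l lI la /=.
- have := H (swapn b c l); rewrite swapnK sa swapn_mem// => /(_ lI); apply.
  by apply: contra_neq la => /(congr1 (swapn b c)); rewrite swapnK sa.
- rewrite sa; apply: H; first by rewrite swapn_mem.
  by apply: contra_neq la => /(congr1 (swapn b c)); rewrite swapnK sa.
Qed.

Lemma argmax_seq (R : realType) (s : seq nat) (x : nat -> R) : s != [::] ->
  exists2 b, b \in s & forall l, l \in s -> x l <= x b.
Proof.
elim: s => [//|a s IH] _; case: (eqVneq s [::]) => [->|sn].
  by exists a; rewrite ?mem_head// => l; rewrite inE => /eqP ->.
have [b bs Hb] := IH sn; case: (leP (x a) (x b)) => ab.
- exists b; first by rewrite in_cons bs orbT.
  by move=> l; rewrite in_cons => /orP [/eqP ->//|]; apply: Hb.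
- exists a; first by rewrite mem_head.
  move=> l; rewrite in_cons => /orP [/eqP ->//|ls].
  by rewrite (le_trans (Hb _ ls))// ltW.
Qed.

Lemma sum_const_seq (R : realType) (s : seq nat) (c : R) :
  \sum_(i <- s) c = c * (size s)%:R.
Proof.
elim: s => [|a s IH]; first by rewrite big_nil mulr0.
by rewrite big_cons IH /= -addn1 natrD mulrDr mulr1 addrC.
Qed.

Lemma max_swap {R : realType} {I : seq nat} {a b} (x : nat -> R) :
  a \in I -> b \in I ->
  Max R I a (fun i => x (swapn a b i)) <-> Max R I b x.
Proof.
move=> aI bI; have ab : (a \in I) = (b \in I) by rewrite aI bI.
split=> H l lI lne /=.
- have := H (swapn a b l); rewrite swapnK swapn_l swapn_mem// => /(_ lI); apply.
  by apply: contra_neq lne => /(congr1 (swapn a b)); rewrite swapnK swapn_l.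
- rewrite swapn_l; apply: H; first by rewrite swapn_mem.
  by apply: contra_neq lne => /(congr1 (swapn a b)); rewrite swapnK swapn_r.
Qed.
Section sym.
Context d (T : measurableType d) (R : realType) (P : probability T R)
  (X : nat -> {RV P >-> R}).
Context (Hind : mutually_independent X) (Hid : identically_distributed X).
Context (Hnotie : forall a b, a != b -> prb P (pre X id [set x | x a = x b]) = 0).

Lemma measGen S : Gen S -> measurable (pre X id S).
Proof. by move=> GS; case: (exch Hind Hid _ (@swapnK 0 0) _ GS) => _ []. Qed.

Lemma sym (I : seq nat) a (S : set (nat -> R)) : uniq I -> a \in I -> Gen S ->
  (forall b c x, b \in I -> c \in I -> S (fun i => x (swapn b c i)) <-> S x) ->
  prb P (pre X id (S `&` Max R I a)) * (size I)%:R = prb P (pre X id S).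
Proof.
move=> uI aI GS Sinv.
pose A b := pre X id (S `&` Max R I b).
have GA b : Gen (S `&` Max R I b) by apply: GenI => //; apply: Gen_Max.
have mA b : measurable (A b) by apply: measGen.
have eqA b : b \in I -> prb P (A b) = prb P (A a).
  move=> bI; have -> : A b = pre X (swapn a b) (S `&` Max R I a).
    apply/seteqP; split=> w [/= H1 H2]; split.
    - exact: (proj2 (Sinv a b (fun i => X i w) aI bI) H1).
    - exact: (proj2 (max_swap (fun i => X i w) aI bI) H2).
    - exact: (proj1 (Sinv a b (fun i => X i w) aI bI) H1).
    - exact: (proj1 (max_swap (fun i => X i w) aI bI) H2).
  rewrite /prb; have [_ [_ ->]] := exch Hind Hid _ (@swapnK a b) _ (GA a).
  by [].
have disj b b' : b \in I -> b' \in I -> b != b' -> A b `&` A b' = set0.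
  move=> bI b'I bb'; apply/seteqP; split=> // w [[_ H1] [_ H2]].
  have := H1 b' b'I; rewrite eq_sym bb' => /(_ isT) h1.
  have := H2 b bI bb' => h2.
  by move: (lt_trans h1 h2); rewrite ltxx.
have sumA : prb P (\big[setU/set0]_(b <- I) A b) = prb P (A a) * (size I)%:R.
  rewrite prb_bigU// (eq_big_seq (fun=> prb P (A a))); last by move=> b /eqA.
  exact: sum_const_seq.
pose Ties := \big[setU/set0]_(l <- I) \big[setU/set0]_(l' <- I)
   (if l != l' then pre X id [set x | x l = x l'] else set0).
have mT l l' : measurable (if l != l' then pre X id [set x | x l = x l'] else set0).
  by case: ifP => _ //; apply: measGen; apply: Gen_eq.
have mT' l : measurable (\big[setU/set0]_(l' <- I)
   (if l != l' then pre X id [set x | x l = x l'] else set0)).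
  by case: (prb_bigU_le P I (mT l)).
have [mTies pTies] := prb_bigU_le P I mT'.
have Ties0 : prb P Ties = 0.
  apply/eqP; rewrite eq_le prb_ge0 andbT (le_trans pTies)//.
  rewrite big_seq big1// => l lI.
  have [_ h] := prb_bigU_le P I (mT l).
  apply/eqP; rewrite eq_le prb_ge0 andbT (le_trans h)//.
  rewrite big_seq big1// => l' l'I; case: ifP => ll'; last by rewrite prb0.
  by rewrite Hnotie.
have [mU _] := prb_bigU_le P I mA.
have mS : measurable (pre X id S) by apply: measGen.
rewrite -sumA; apply/eqP; rewrite eq_le; apply/andP; split.
- apply: prb_le => // w /in_bigsetU_seq [b _ []]; done.
- rewrite -[X in _ <= X]addr0 -Ties0 (le_trans _ (prbU_le P mU mTies))//.
  apply: prb_le => //; first exact: measurableU.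
  move=> w Sw; set x := fun i => X i w.
  have In : I != [::] by apply: contraTneq aI => ->.
  have [b bI Hb] := @argmax_seq R I x In.
  have [allb|] := boolP (all (fun l => (l != b) ==> (x l < x b)) I).
  - left; apply/in_bigsetU_seq; exists b => //; split => // l lI lb.
    by have := allP allb l lI; rewrite lb.
  - case/allPn => l lI; rewrite negb_imply => /andP [lb]; rewrite -leNgt => xbl.
    right; apply/in_bigsetU_seq; exists l => //; apply/in_bigsetU_seq.
    exists b => //; rewrite lb; apply/eqP; rewrite eq_le xbl andbT.
    exact: Hb.
Qed.

End sym.
Arguments measGen {d T R P X}.
Arguments sym {d T R P X}.
Section notie.
Context d (T : measurableType d) (R : realType) (P : probability T R)
  (X : nat -> {RV P >-> R}).
Context (Hind : mutually_independent X) (Hid : identically_distributed X).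
Context (Hc : continuous (common_cdf X)).

Local Notation F := (common_cdf X).

Lemma F_cdf y : F y = fine (cdf (X 0%N) y).
Proof. by rewrite /common_cdf /prb /cdf /distribution /pushforward preimage_itvNyc. Qed.

Lemma Fmono y z : y <= z -> F y <= F z.
Proof.
move=> yz; rewrite -!(prbX_le Hid 0).
apply: prb_le; try exact: mX; try exact: measurable_itv.
by move=> w /=; rewrite !in_itv/= => /le_trans; apply.
Qed.

Lemma F_low e : 0 < e -> exists u, F u < e.
Proof.
move=> e0.
have h : cdf (X 0%N) x @[x --> -oo] --> (0:R)%:E by exact: cvg_cdfNy0.
have c0 : (fine \o cdf (X 0%N)) x @[x --> -oo] --> (0:R) by exact: fine_cvg h.
have H : \forall t \near -oo, (fine \o cdf (X 0%N)) t < e by exact: cvgr_lt c0 _ e0.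
have [u Hu] := filter_ex H; exists u.
by rewrite F_cdf.
Qed.

Lemma F_high e : e < 1 -> exists u, e < F u.
Proof.
move=> e1.
have h : cdf (X 0%N) x @[x --> +oo] --> (1:R)%:E by exact: cvg_cdfy1.
have c0 : (fine \o cdf (X 0%N)) x @[x --> +oo] --> (1:R) by exact: fine_cvg h.
have H : \forall t \near +oo, e < (fine \o cdf (X 0%N)) t by exact: cvgr_gt c0 _ e1.
have [u Hu] := filter_ex H; exists u.
by rewrite F_cdf.
Qed.


Lemma indep2 a b (C : set R) : a != b -> measurable C ->
  prb P (X a @^-1` C `&` X b @^-1` C) = prb P (X a @^-1` C) * prb P (X b @^-1` C).
Proof.
move=> ab mC.
have u : uniq [:: a; b] by rewrite /= mem_seq1 ab.
have := Hind [:: a; b] (fun=> C) u (fun=> mC).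
rewrite !big_cons big_nil mulr1 => <-; congr prb.
apply/seteqP; split=> w /=.
- by move=> [h1 h2] i /=; rewrite !inE => /orP [] /eqP ->.
- by move=> h; split; apply: h => /=; rewrite !inE eqxx ?orbT.
Qed.

Lemma notie a b : a != b -> prb P (pre X id [set x | x a = x b]) = 0.
Proof.
move=> ab.
have mT : measurable (pre X id [set x | x a = x b]).
  exact: (measGen Hind Hid _ (Gen_eq _ a b)).
suff bound : forall n, prb P (pre X id [set x | x a = x b]) <= (n.+1%:R)^-1.
  set x := prb P _ in bound *; apply/eqP; rewrite eq_le prb_ge0 andbT.
  rewrite leNgt; apply/negP => x0.
  have ix0 : 0 < x^-1 by rewrite invr_gt0.
  have hb := archi_boundP (ltW ix0).
  have := bound (Num.bound x^-1).
  set B := (Num.bound x^-1)%:R in hb *.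
  have xy : x * x^-1 = 1 by rewrite mulfV// gt_eqF.
  have B0 : 0 < B + 1 by rewrite (lt_trans (lt_trans ix0 hb))// ltrDl ltr01.
  rewrite -addn1 natrD -/B => h.
  have : x * (B + 1) <= 1.
    have Bn0 : B + 1 != 0 by rewrite gt_eqF.
    by move: h; rewrite -(ler_pM2r B0) mulVf.
  have : x * x^-1 < x * (B + 1) by rewrite ltr_pM2l// (lt_trans hb)// ltrDl ltr01.
  rewrite xy => h2 h3; move: (lt_le_trans h2 h3); by rewrite ltxx.
move=> n; pose N := n.+1.
have N0 : (0 < N%:R :> R) by rewrite ltr0n.
have iN0 : (0 < N%:R^-1 :> R) by rewrite invr_gt0.
have NiN : N%:R * N%:R^-1 = 1 :> R by rewrite mulfV// gt_eqF.
have [u Fu] := F_low _ iN0.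
have [v Fv] : exists v, 1 - N%:R^-1 < F v by apply: F_high; rewrite gtrBl.
have tex m : exists t, (0 < m < N)%N -> F t = m%:R * N%:R^-1.
  case: (boolP (0 < m < N)%N) => [/andP [m0 mN]|]; last by exists 0.
  have m1 : (1 <= m%:R :> R) by rewrite ler1n.
  have m2 : (m%:R + 1 <= N%:R :> R) by rewrite natr1 ler_nat.
  have f1 : N%:R^-1 <= m%:R * N%:R^-1 :> R.
    by have := ler_wpM2r (ltW iN0) m1; rewrite mul1r.
  have f2 : m%:R * N%:R^-1 <= 1 - N%:R^-1 :> R.
    by have := ler_wpM2r (ltW iN0) m2; rewrite mulrDl mul1r NiN lerBrDr.
  have uv : u <= v.
    rewrite leNgt; apply/negP => /ltW /Fmono h.
    have := le_lt_trans (le_trans f2 (ltW Fv)) (le_lt_trans h (lt_le_trans Fu f1)).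
    by rewrite ltxx.
  have hv : Num.min (F u) (F v) <= m%:R * N%:R^-1 <= Num.max (F u) (F v).
    rewrite min_l ?max_r ?Fmono//; apply/andP; split.
      exact: le_trans (ltW Fu) f1.
    exact: le_trans f2 (ltW Fv).
  have [t _ Ht] := IVT uv (continuous_subspaceT Hc) hv.
  by exists t.
have [t Ht] := choice tex.
pose U m : set R := if m == 0%N then set0 else if m == N then setT
  else `]-oo, t m]%classic.
have mU m : measurable (U m).
  rewrite /U; case: ifP => _; first exact: measurable0.
  case: ifP => _; [exact: measurableT|exact: measurable_itv].
have pU i m : (m <= N)%N -> prb P (X i @^-1` U m) = m%:R * N%:R^-1.
  move=> mN; rewrite /U; case: (eqVneq m 0%N) => [->|m0].
    by rewrite preimage_set0 prb0 mul0r.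
  case: (eqVneq m N) => [->|mN']; first by rewrite preimage_setT prbT NiN.
  by rewrite (prbX_le Hid) Ht // lt0n m0 ltn_neqAle mN' mN.
have Usub m : (m < N)%N -> U m `<=` U m.+1.
  move=> mN; rewrite /U; case: (eqVneq m 0%N) => [_|m0]; first exact: sub0set.
  case: (eqVneq m.+1 N) => [_|mN']; first by case: ifP.
  rewrite (ltn_eqF mN) => r /=; rewrite !in_itv/= => h; apply: (le_trans h).
  have h1 : (0 < m < N)%N by rewrite lt0n m0 mN.
  have h2 : (0 < m.+1 < N)%N by apply/andP; split => //; rewrite ltn_neqAle mN' mN.
  rewrite leNgt; apply/negP => /ltW /Fmono; rewrite (Ht _ h1) (Ht _ h2).
  by rewrite ler_pM2r// ler_nat ltnn.
pose cell m := U m.+1 `\` U m.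
have mcell m : measurable (cell m) by apply: measurableD.
have pcell i m : (m < N)%N -> prb P (X i @^-1` cell m) = N%:R^-1.
  move=> mN.
  rewrite (_ : X i @^-1` cell m = X i @^-1` U m.+1 `\` X i @^-1` U m) //.
  rewrite prbD; [|exact: mX|exact: mX|by move=> w; apply: Usub].
  by rewrite (pU _ _ mN) (pU _ _ (ltnW mN)) -natr1 mulrDl mul1r addrC addKr.
have cover : pre X id [set x | x a = x b] `<=`
    \big[setU/set0]_(m <- iota 0 N) (X a @^-1` cell m `&` X b @^-1` cell m).
  move=> w /= eqw.
  suff [m mN cm] : exists2 m, (m < N)%N & cell m (X a w).
    have mI : m \in iota 0 N by rewrite mem_iota add0n.
    apply/in_bigsetU_seq; exists m => //.
    by split => //; rewrite /preimage /= -eqw.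
  have H : forall k, (k <= N)%N -> U k (X a w) -> exists2 m, (m < k)%N & cell m (X a w).
    elim=> [|k IH] kN; first by rewrite /U eqxx.
    move=> Uk; have [Uk'|nUk'] := pselect (U k (X a w)).
    - have [m mk cm] := IH (ltnW kN) Uk'; exists m => //; exact: ltnW.
    - by exists k => //; split.
  by apply: H => //; rewrite /U eqxx.
have [mC hC] := prb_bigU_le P (iota 0 N)
   (fun m => measurableI _ _ (mX X a _ (mcell m)) (mX X b _ (mcell m))).
apply: (le_trans (prb_le P mT mC cover)); apply: (le_trans hC).
rewrite big_seq (eq_bigr (fun=> N%:R^-1 * N%:R^-1)); last first.
  by move=> m; rewrite mem_iota add0n => /andP [_ mN]; rewrite indep2 ?pcell.
rewrite -big_seq sum_const_seq size_iota -mulrA mulVf ?mulr1//.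
by rewrite gt_eqF.
Qed.

End notie.
Arguments notie {d T R P X}.
Arguments Fmono {d T R P X}.
Section final.
Context d (T : measurableType d) (R : realType) (P : probability T R)
  (X : nat -> {RV P >-> R}).
Context (Hind : mutually_independent X) (Hid : identically_distributed X).
Context (Hc : continuous (common_cdf X)).

Local Notation F := (common_cdf X).

Definition Inv (I : seq nat) (S : set (nat -> R)) := forall b c x,
  b \in I -> c \in I -> S (fun i => x (swapn b c i)) <-> S x.

Lemma InvI I A B : Inv I A -> Inv I B -> Inv I (A `&` B).
Proof.
move=> HA HB b c x bI cI; split=> -[h1 h2]; split.
- exact: (proj1 (HA b c x bI cI) h1).
- exact: (proj1 (HB b c x bI cI) h2).
- exact: (proj2 (HA b c x bI cI) h1).
- exact: (proj2 (HB b c x bI cI) h2).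
Qed.

Lemma InvC I A : Inv I A -> Inv I (~` A).
Proof.
move=> HA b c x bI cI; split=> h1 h2; apply: h1.
- exact: (proj2 (HA b c x bI cI) h2).
- exact: (proj1 (HA b c x bI cI) h2).
Qed.

Lemma InvT I : Inv I setT.
Proof. by []. Qed.

Lemma Inv_sub I1 I2 S : {subset I1 <= I2} -> Inv I2 S -> Inv I1 S.
Proof. by move=> sub H b c x bI cI; apply: H; apply: sub. Qed.

Lemma Inv_box I (s : seq nat) (y : R) :
  (forall b c, b \in I -> c \in I -> (b \in s) = (c \in s)) -> Inv I (Box s y).
Proof. by move=> H b c x bI cI; apply: inv_box; apply: H. Qed.

Lemma Inv_max I I' a :
  (forall b c, b \in I -> c \in I -> [/\ (b \in I') = (c \in I'), b != a & c != a]) ->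
  Inv I (Max R I' a).
Proof. by move=> H b c x bI cI; have [h1 h2 h3] := H b c bI cI; apply: inv_max. Qed.

Lemma prod_const_seq (s : seq nat) (c : R) : \prod_(i <- s) c = c ^+ size s.
Proof.
elim: s => [|a s IH]; first by rewrite big_nil expr0.
by rewrite big_cons IH /= exprS.
Qed.

Lemma prb_box (s : seq nat) y : uniq s ->
  prb P (pre X id (Box s y)) = F y ^+ size s.
Proof.
move=> us; rewrite /Box (prb_rect Hind Hid) ?undup_id//.
exact: prod_const_seq.
Qed.

Lemma recE j : (0 < j)%N -> is_record X j = pre X id (Max R (iota 0 j) j.-1).
Proof.
move=> j0; apply/seteqP; split=> w /=.
- move=> H l; rewrite mem_iota add0n => /andP [_ lj] lJ.
  have := H l.+1; rewrite /Xn /=; apply; lia.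
- move=> H i /andP [i1 ij]; rewrite /Xn; apply: H.
    by rewrite mem_iota; lia.
  apply/eqP; lia.
Qed.

Let Hnt := notie Hind Hid Hc.
Let symL := sym Hind Hid Hnt.

Lemma preI (A B : set (nat -> R)) : pre X id (A `&` B) = pre X id A `&` pre X id B.
Proof. by []. Qed.

Lemma main_res (j k : nat) (y1 y2 : R) : (1 <= j)%N -> (j < k)%N ->
  let F := common_cdf X in
  let p := cond_prob P
      ([set w | Xn X j w <= y1] `&` [set w | Xn X k w <= y2])
      (is_record X j `&` is_record X k) in
  (F y1 < F y2 ->
     p = F y1 ^+ j / (k - j)%:R * (k%:R * F y2 ^+ (k - j) - j%:R * F y1 ^+ (k - j)))
  /\
  (F y2 <= F y1 ->
     p = F y2 ^+ k /\
     F y2 ^+ k = cond_prob P [set w | Xn X k w <= y2] (is_record X k)).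
Proof.
move=> j1 jk F0 p; rewrite /p /F0 {p F0}.
set J := j.-1; set K := k.-1.
have k0 : (0 < k)%N by lia.
have JI : J \in iota 0 j by rewrite mem_iota; lia.
have KI : K \in iota 0 k by rewrite mem_iota; lia.
pose RJ := Max R (iota 0 j) J.
pose RK := Max R (iota 0 k) K.
have GRJ : Gen RJ by apply: Gen_Max.
have GRK : Gen RK by apply: Gen_Max.
have mG S : Gen S -> measurable (pre X id S) by apply: (measGen Hind Hid).
have Lk S0 : Gen S0 -> Inv (iota 0 k) S0 ->
    prb P (pre X id (S0 `&` RK)) * k%:R = prb P (pre X id S0).
  move=> G I; rewrite -[in Y in _ * Y = _](size_iota 0 k); exact: (symL _ _ _ (iota_uniq 0 k) KI G I).
have Lj S0 : Gen S0 -> Inv (iota 0 k) S0 ->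
    prb P (pre X id ((S0 `&` RK) `&` RJ)) * j%:R = prb P (pre X id (S0 `&` RK)).
  move=> G I; rewrite -[in Y in _ * Y = _](size_iota 0 j); apply: (symL _ _ _ (iota_uniq 0 j) JI).
    exact: GenI.
  apply: InvI.
    by apply: Inv_sub I => b; rewrite !mem_iota; lia.
  apply: Inv_max => b c; rewrite !mem_iota => h1 h2; split.
  - by rewrite ?mem_iota; apply/idP/idP; lia.
  - apply/eqP; lia.
  - apply/eqP; lia.
have Lboth S0 : Gen S0 -> Inv (iota 0 k) S0 ->
    prb P (pre X id ((S0 `&` RK) `&` RJ)) * j%:R * k%:R = prb P (pre X id S0).
  by move=> G I; rewrite Lj// Lk.
have recs : is_record X j `&` is_record X k = pre X id ((setT `&` RK) `&` RJ).
  by rewrite (recE _ j1) (recE _ k0) setTI setIC.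
have hden : prb P (is_record X j `&` is_record X k) * j%:R * k%:R = 1.
  rewrite recs Lboth; [exact: prbT|exact: GenT|exact: InvT].
pose BK (y : R) := Box (iota 0 k) y.
have GBK y : Gen (BK y) by apply: Gen_rect.
have IBK y : Inv (iota 0 k) (BK y) by apply: Inv_box => b c -> ->.
have pBK y : prb P (pre X id ((BK y `&` RK) `&` RJ)) * j%:R * k%:R = F y ^+ k.
  by rewrite Lboth// prb_box ?size_iota ?iota_uniq.
have Ee : [set w | Xn X j w <= y1] `&` [set w | Xn X k w <= y2] `&`
    (is_record X j `&` is_record X k) =
    pre X id (([set x | x J <= y1] `&` [set x | x K <= y2]) `&` ((setT `&` RK) `&` RJ)).
  by rewrite recs.
have GE : Gen (([set x | x J <= y1] `&` [set x | x K <= y2]) `&` ((setT `&` RK) `&` RJ)).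
  by apply: GenI; apply: GenI; try apply: GenI; try apply: Gen_le; try apply: GenT.
split.
- move=> F12.
  have y12 : y1 < y2.
    rewrite ltNge; apply/negP => /(Fmono Hid) h.
    by move: (lt_le_trans F12 h); rewrite ltxx.
  rewrite /cond_prob Ee.
  set ValE := (_ `&` _ `&` _) in GE *.
  pose m := (k - j)%N.
  pose I2 := iota j m.
  have KI2 : K \in I2 by rewrite mem_iota; lia.
  have JIk : J \in iota 0 k by rewrite mem_iota; lia.
  pose M2 := Max R I2 K.
  pose B1 := Box (iota 0 j) y1.
  pose B2 := Box I2 y2.
  pose S2 := (B1 `&` B2) `&` ~` BK y1.
  have GS2 : Gen S2.
    by apply: GenI; [apply: GenI|apply: GenC]; apply: Gen_rect.
  have GM2 : Gen M2 by apply: Gen_Max.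
  have split_E : ValE = ((BK y1 `&` RK) `&` RJ) `|` ((S2 `&` M2) `&` RJ).
    apply/seteqP; split=> x.
    + move=> [[h1 h2] [[_ hK] hJ]]; case: (leP (x K) y1) => xK.
      * left; split => //; split => // l lI; case: (eqVneq l K) => [->//|lK].
        exact: (le_trans (ltW (hK l lI lK)) xK).
      * right; split => //; split; last first.
          move=> l lI lK; apply: hK => //; move: lI; rewrite !mem_iota; lia.
        split; last by move=> hB; move: (hB K KI); rewrite leNgt xK.
        split.
        - move=> l lI; case: (eqVneq l J) => [->//|lJ].
          exact: (le_trans (ltW (hJ l lI lJ)) h1).
        - move=> l lI; case: (eqVneq l K) => [->//|lK].
          have lIk : l \in iota 0 k by move: lI; rewrite !mem_iota; lia.
          exact: (le_trans (ltW (hK l lIk lK)) h2).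
    + move=> [[[hB hK] hJ]|[[[[hB1 hB2] nB] hM] hJ]].
      * split; last by [].
        split; first exact: hB.
        exact: (le_trans (hB K KI) (ltW y12)).
      * have xK : y1 < x K.
          rewrite ltNge; apply/negP => hK; apply: nB => l lI.
          case: (ltnP l j) => lj.
            by apply: hB1; rewrite mem_iota; lia.
          case: (eqVneq l K) => [->//|lK].
          have lI2 : l \in I2 by move: lI; rewrite !mem_iota; lia.
          exact: (le_trans (ltW (hM l lI2 lK)) hK).
        split; first split.
        - by apply: hB1.
        - by apply: hB2.
        split => //; split => // l lI lK.
        case: (ltnP l j) => lj.
          have lIj : l \in iota 0 j by rewrite mem_iota; lia.
          exact: (le_lt_trans (hB1 l lIj) xK).
        by apply: hM => //; move: lI; rewrite !mem_iota; lia.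
  have disj : ((BK y1 `&` RK) `&` RJ) `&` ((S2 `&` M2) `&` RJ) = set0.
    by apply/seteqP; split=> // x [[[hB _] _] [[[_ nB] _] _]].
  have mEa : measurable (pre X id ((BK y1 `&` RK) `&` RJ)).
    by apply: mG; apply: GenI => //; apply: GenI.
  have mEb : measurable (pre X id ((S2 `&` M2) `&` RJ)).
    by apply: mG; apply: GenI => //; apply: GenI.
  have pE : prb P (pre X id ValE) = prb P (pre X id ((BK y1 `&` RK) `&` RJ)) +
      prb P (pre X id ((S2 `&` M2) `&` RJ)).
    rewrite split_E; apply: (prbU P mEa mEb).
    by rewrite -preI disj.
  have hEb1 : prb P (pre X id ((S2 `&` M2) `&` RJ)) * j%:R = prb P (pre X id (S2 `&` M2)).
    rewrite -[in Y in _ * Y = _](size_iota 0 j); apply: (symL _ _ _ (iota_uniq 0 j) JI).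
      exact: GenI.
    apply: InvI; first apply: InvI; first apply: InvI.
    - by apply: Inv_box => b c; rewrite !mem_iota => h1 h2; apply/idP/idP; lia.
    - by apply: Inv_box => b c; rewrite !mem_iota => h1 h2; apply/idP/idP; lia.
    - by apply: InvC; apply: Inv_box => b c; rewrite !mem_iota => h1 h2; apply/idP/idP; lia.
    - apply: Inv_max => b c; rewrite !mem_iota => h1 h2; split.
      + by rewrite ?mem_iota; apply/idP/idP; lia.
      + apply/eqP; lia.
      + apply/eqP; lia.
  have hEb2 : prb P (pre X id (S2 `&` M2)) * m%:R = prb P (pre X id S2).
    rewrite -[in Y in _ * Y = _](size_iota j m); apply: (symL _ _ _ (iota_uniq j m) KI2 GS2).
    apply: InvI; first apply: InvI.
    - by apply: Inv_box => b c; rewrite !mem_iota => h1 h2; apply/idP/idP; lia.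
    - by apply: Inv_box => b c; rewrite !mem_iota => h1 h2; apply/idP/idP; lia.
    - by apply: InvC; apply: Inv_box => b c; rewrite !mem_iota => h1 h2; apply/idP/idP; lia.
  have hS2 : prb P (pre X id S2) = F y1 ^+ j * F y2 ^+ m - F y1 ^+ k.
    have e1 : pre X id S2 = pre X id (B1 `&` B2) `\` pre X id (BK y1) by [].
    have mB12 : measurable (pre X id (B1 `&` B2)).
      by apply: mG; apply: GenI; apply: Gen_rect.
    rewrite e1 prbD //; last 2 first.
    - by apply: mG; apply: Gen_rect.
    - move=> w h; split=> l lI.
      + by apply: h; move: lI; rewrite !mem_iota; lia.
      + apply: (le_trans _ (ltW y12)); apply: h; move: lI; rewrite !mem_iota; lia.
    rewrite prb_box ?iota_uniq // size_iota.
    have -> : B1 `&` B2 = Rect (iota 0 j ++ I2) (fun i => if (i < j)%N then y1 else y2).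
      apply/seteqP; split=> x /=.
      - move=> [h1 h2] i; rewrite mem_cat => /orP [] iI.
        + have -> : (i < j)%N by move: iI; rewrite mem_iota; lia.
          exact: h1.
        + have -> : (i < j)%N = false by move: iI; rewrite mem_iota; lia.
          exact: h2.
      - move=> h; split=> i iI; have := h i; rewrite mem_cat iI ?orbT => /(_ isT).
        + have -> // : (i < j)%N by move: iI; rewrite mem_iota; lia.
        + have -> // : (i < j)%N = false by move: iI; rewrite mem_iota; lia.
    have u : uniq (iota 0 j ++ I2).
      rewrite cat_uniq !iota_uniq /= andbT; apply/hasPn => i.
      by rewrite !mem_iota; lia.
    rewrite (prb_rect Hind Hid) // undup_id // big_cat /=.
    rewrite (eq_big_seq (fun=> F y1)); last first.
      by move=> i; rewrite mem_iota => /andP [_ ij]; rewrite ij.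
    rewrite [X in _ * X](eq_big_seq (fun=> F y2)); last first.
      by move=> i; rewrite mem_iota => /andP [ij _]; rewrite ltnNge ij.
    by rewrite !prod_const_seq !size_iota.
  have jn0 : j%:R != 0 :> R by rewrite pnatr_eq0; lia.
  have kn0 : k%:R != 0 :> R by rewrite pnatr_eq0; lia.
  have mn0 : m%:R != 0 :> R by rewrite pnatr_eq0; lia.
  have jkn0 : j%:R * k%:R != 0 :> R by rewrite mulf_eq0 negb_or jn0.
  have eEa : prb P (pre X id ((BK y1 `&` RK) `&` RJ)) = F y1 ^+ k / (j%:R * k%:R).
    by rewrite -pBK -(mulrA _ j%:R k%:R) mulfK.
  have eS : prb P (pre X id (S2 `&` M2)) = (F y1 ^+ j * F y2 ^+ m - F y1 ^+ k) / m%:R.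
    by rewrite -hS2 -hEb2 mulfK.
  have eEb : prb P (pre X id ((S2 `&` M2) `&` RJ)) = prb P (pre X id (S2 `&` M2)) / j%:R.
    by rewrite -hEb1 mulfK.
  have eden : prb P (is_record X j `&` is_record X k) = 1 / (j%:R * k%:R).
    by apply: (mulIf jkn0); rewrite mulrA hden div1r mulVf.
  have ek : F y1 ^+ k = F y1 ^+ j * F y1 ^+ m by rewrite -exprD subnKC// ltnW.
  have kr : k%:R = j%:R + m%:R :> R by rewrite -natrD subnKC// ltnW.
  rewrite pE eEa eEb eS eden -/m ek kr.
  rewrite kr in jkn0 kn0.
  by field; rewrite ?jn0 ?mn0 ?kn0.
- move=> F21; split.
  + rewrite /cond_prob Ee.
    set ValE := (_ `&` _ `&` _) in GE *.
    have JIk : J \in iota 0 k by rewrite mem_iota; lia.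
    have key : prb P (pre X id ValE) = prb P (pre X id ((BK y2 `&` RK) `&` RJ)).
      pose D := X J @^-1` `]-oo, y2] `\` X J @^-1` `]-oo, y1].
      have mD : measurable D by apply: measurableD; apply: mX; apply: measurable_itv.
      have mE := mG _ GE.
      have mE2 : measurable (pre X id ((BK y2 `&` RK) `&` RJ)).
        by apply: mG; apply: GenI => //; apply: GenI.
      have sub1 : pre X id ValE `<=` pre X id ((BK y2 `&` RK) `&` RJ).
        move=> w [[h1 h2] [[_ hK] hJ]]; split => //; split => //.
        move=> l lI; case: (eqVneq l K) => [->//|lK].
        exact: (le_trans (ltW (hK l lI lK)) h2).
      have sub2 : pre X id ((BK y2 `&` RK) `&` RJ) `<=` pre X id ValE `|` D.
        move=> w [[hB hK] hJ]; case: (leP (X J w) y1) => h.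
        * left; split; first by split => //; apply: hB.
          by split.
        * right; split; first by rewrite /= in_itv /=; apply: hB.
          by rewrite /= in_itv /= leNgt h.
      have pD : prb P D = 0.
        case: (ltP y1 y2) => y12.
        - rewrite prbD; [|apply: mX; exact: measurable_itv|apply: mX; exact: measurable_itv|].
            rewrite !(prbX_le Hid); apply/eqP; rewrite eq_le subr_le0 F21 /=.
            rewrite subr_ge0; apply: (Fmono Hid); exact: ltW.
          by move=> w /=; rewrite !in_itv /= => h; exact: (le_trans h (ltW y12)).
        - rewrite (_ : D = set0) ?prb0//; apply/seteqP; split => // w [h1 h2].
          apply: h2; move: h1; rewrite /= !in_itv /= => h1.
          exact: (le_trans h1 y12).
      apply/eqP; rewrite eq_le (prb_le P mE mE2 sub1) /=.
      rewrite (le_trans (prb_le P mE2 (measurableU _ _ mE mD) sub2))//.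
      by rewrite (le_trans (prbU_le P mE mD))// pD addr0.
    rewrite key.
    have jkn0 : j%:R * k%:R != 0 :> R by rewrite mulf_eq0 !pnatr_eq0 negb_or; apply/andP; split; lia.
    have eq_q : prb P (pre X id ((BK y2 `&` RK) `&` RJ)) = F y2 ^+ k / (j%:R * k%:R).
      by rewrite -pBK -(mulrA _ j%:R k%:R) mulfK.
    have eq_den : prb P (is_record X j `&` is_record X k) = 1 / (j%:R * k%:R).
      by apply: (mulIf jkn0); rewrite mulrA hden div1r mulVf.
    by rewrite eq_q eq_den div1r invrK divfK.
  + rewrite /cond_prob (recE _ k0).
    rewrite (_ : _ `&` _ = pre X id (BK y2 `&` RK)); last first.
      apply/seteqP; split=> w /=.
      * move=> [h1 h2]; split => // l lI; case: (eqVneq l K) => [->//|lK].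
        exact: (le_trans (ltW (h2 l lI lK)) h1).
      * by move=> [h1 h2]; split => //; apply: h1.
    have h1 := Lk _ (GBK y2) (IBK y2).
    have h2 := Lk _ (GenT R) (InvT _); rewrite setTI in h2.
    rewrite (_ : prb P (pre X id setT) = 1) in h2; last exact: prbT.
    have kn0 : k%:R != 0 :> R by rewrite pnatr_eq0; lia.
    rewrite prb_box ?iota_uniq// size_iota in h1.
    have eB : prb P (pre X id RK) = 1 / k%:R.
      by apply: (mulIf kn0); rewrite h2 div1r mulVf.
    have eA : prb P (pre X id (BK y2 `&` RK)) = F y2 ^+ k / k%:R.
      by apply: (mulIf kn0); rewrite h1 divfK.
    rewrite eA [Y in _ / Y](_ : _ = 1 / k%:R); last exact: eB.
    by rewrite div1r invrK divfK.
Qed.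

End final.

Theorem corollary3 (d : measure_display) (T : measurableType d) (R : realType)
  (P : probability T R) (X : nat -> {RV P >-> R}) :
  mutually_independent X -> identically_distributed X ->
  continuous (@common_cdf d T R P X) ->
  forall (j k : nat) (y1 y2 : R), (1 <= j)%N -> (j < k)%N ->
  let F := common_cdf X in
  let p := cond_prob P
      ([set w | Xn X j w <= y1] `&` [set w | Xn X k w <= y2])
      (is_record X j `&` is_record X k) in
  (F y1 < F y2 ->
     p = F y1 ^+ j / (k - j)%:R * (k%:R * F y2 ^+ (k - j) - j%:R * F y1 ^+ (k - j)))
  /\
  (F y2 <= F y1 ->
     p = F y2 ^+ k /\
     F y2 ^+ k = cond_prob P [set w | Xn X k w <= y2] (is_record X k)).
Proof.
move=> Hind Hid Hc j k y1 y2 j1 jk.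
exact: (@main_res d T R P X Hind Hid Hc j k y1 y2 j1 jk).
Qed.
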